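(* Let $T\ge1$, $K_0=\{x_0\}$, $K_1,\dots,K_T\subseteq\mathbb R$ closed with $\mathrm{card}(K_{t+1})\ge\mathrm{card}(K_t)$ for $t=0,\dots,T-1$, $\Omega=K_0\times\dots\times K_T$. Let $\mathcal E_t\subseteq C_t$ be vector subspaces with $X_t\in\mathcal E_t$ and $\mathcal E_t+\mathbb R=\mathcal E_t$, and $\mathcal E=\mathcal E_0\times\dots\times\mathcal E_T$. If $\varphi,\psi\in\mathcal E$ and $\Delta\in\mathcal H$ satisfy $\sum_{t=0}^T\varphi_t=\sum_{t=0}^T\psi_t+I^\Delta$ on $\Omega$, then there exist constants $k_0,\dots,k_T,h_0,\dots,h_T\in\mathbb R$ with $\psi_t(x_t)=\varphi_t(x_t)+k_tx_t+h_t$ for all $x_t\in K_t$, $t=0,\dots,T$. In particular, if $S_t:\mathcal E_t\to\mathbb R$ ($t=0,\dots,T$) are stock additive, then $\sum_tS_t(\varphi_t)=\sum_tS_t(\psi_t)$, and on $\mathcal V=\mathcal E_0+\dots+\mathcal E_T+\mathcal I$ the map $v=\sum_t\varphi_t+I^\Delta\mapsto S(v):=\sum_tS_t(\varphi_t)$ is well defined, cash additive and integral additive.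
   Context: $X_t(x_t)=x_t$. $C_t$: continuous $\phi:K_t\to\mathbb R$ with $\sup|\phi(x_t)|/(1+|x_t|)<\infty$, regarded as functions on $\Omega$. $\mathcal H$: $\Delta=(\Delta_0,\dots,\Delta_{T-1})$ with $\Delta_t$ bounded continuous on $K_0\times\dots\times K_t$; $I^\Delta(x)=\sum_{t=0}^{T-1}\Delta_t(x_0,\dots,x_t)(x_{t+1}-x_t)$; $\mathcal I=\{I^\Delta:\Delta\in\mathcal H\}$. $p_t:\mathcal E_t\to\mathbb R$ is stock additive if $p_t(0)=0$ and $p_t(\varphi_t+\alpha X_t+\beta)=p_t(\varphi_t)+\alpha x_0+\beta$ for all $\varphi_t\in\mathcal E_t$, $\alpha,\beta\in\mathbb R$. $S$ is cash additive if $S(v+k)=S(v)+k$ for $k\in\mathbb R$, and integral additive if $S(v+I^\Delta)=S(v)$ for all $\Delta\in\mathcal H$. *)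

(* Defs.v *)
From HB Require Import structures.
From mathcomp Require Import all_boot all_order all_algebra.
From mathcomp Require Import all_classical all_reals all_analysis.
Unset Printing Implicit Defensive.
Import Order.TTheory GRing.Theory Num.Theory.
Import numFieldNormedType.Exports.
Local Open Scope classical_set_scope.
Local Open Scope ring_scope.

Section Defs.
Context {R : realType}.

(* A function "on K" is encoded as a function R -> R vanishing outside K
   (zero extension), so that equality of elements of C_t is Leibniz equality. *)

Definition inC (K : set R) (f : R -> R) : Prop :=
  {within K, continuous f} /\
  (exists M : R, forall x, K x -> `|f x| <= M * (1 + `|x|)) /\
  (forall x, ~ K x -> f x = 0).

Definition Xfun (K : set R) : R -> R := fun x => if x \in K then x else 0.
Definition cstK (K : set R) (c : R) : R -> R :=
  fun x => if x \in K then c else 0.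

Definition good_space (K : set R) (E : set (R -> R)) : Prop :=
  E `<=` inC K /\
  [/\ E (fun _ => 0),
      (forall f g, E f -> E g -> E (f \+ g)),
      (forall (a : R) f, E f -> E (fun x => a * f x)),
      E (Xfun K) &
      (forall f (c : R), E f -> E (f \+ cstK K c))].

Definition prodK (K : nat -> set R) (t : nat) : set 'rV[R]_t.+1 :=
  [set y | forall i : 'I_t.+1, K (val i) (y ord0 i)].

Definition prefix (x : nat -> R) (t : nat) : 'rV[R]_t.+1 :=
  \row_(i < t.+1) x (val i).

Definition inH (T : nat) (K : nat -> set R)
    (Delta : forall t : nat, 'rV[R]_t.+1 -> R) : Prop :=
  forall t, (t < T)%N ->
    {within prodK K t, continuous (Delta t)} /\
    (exists M : R, forall y, prodK K t y -> `|Delta t y| <= M).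

Definition Iint (T : nat) (Delta : forall t : nat, 'rV[R]_t.+1 -> R)
    (x : nat -> R) : R :=
  \sum_(t < T) Delta t (prefix x t) * (x t.+1 - x t).

Definition inOmega (T : nat) (K : nat -> set R) (x : nat -> R) : Prop :=
  forall t, (t <= T)%N -> K t (x t).

Definition stock_additive (x0 : R) (K : set R) (E : set (R -> R))
    (p : (R -> R) -> R) : Prop :=
  p (fun _ => 0) = 0 /\
  forall f (a b : R), E f ->
    p (fun x => f x + a * Xfun K x + cstK K b x) = p f + a * x0 + b.

Definition represents (T : nat) (K : nat -> set R) (E : nat -> set (R -> R))
    (phi : nat -> R -> R) (Delta : forall t : nat, 'rV[R]_t.+1 -> R)
    (v : (nat -> R) -> R) : Prop :=
  (forall t, (t <= T)%N -> E t (phi t)) /\ inH T K Delta /\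
  forall x, inOmega T K x -> v x = \sum_(t < T.+1) phi t (x t) + Iint T Delta x.

Definition inV (T : nat) (K : nat -> set R) (E : nat -> set (R -> R))
    (v : (nat -> R) -> R) : Prop :=
  exists phi Delta, represents T K E phi Delta v.

End Defs.

(* Main.v *)
Require Import Defs.
From HB Require Import structures.
From mathcomp Require Import all_boot all_order all_algebra.
From mathcomp Require Import all_classical all_reals all_analysis.
From mathcomp Require Import ring lra zify.
Import Order.TTheory GRing.Theory Num.Theory.
Import numFieldNormedType.Exports.
Local Open Scope classical_set_scope.
Local Open Scope ring_scope.

Definition subs {R : realType} (A : set R) := forall a b, A a -> A b -> a = b.

Definition fit {R : realType} (K : nat -> set R) (T : nat) (g : nat -> R -> R)
  (k h : nat -> R) := forall t, (t <= T)%N -> forall y, K t y -> g t y = k t * y + h t.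

Definition ext {R : realType} (x : nat -> R) (T : nat) (a : R) : nat -> R :=
  fun t => if t == T.+1 then a else x t.

Lemma ext_omega {R : realType} (K : nat -> set R) T x a :
  inOmega T K x -> K T.+1 a -> inOmega T.+1 K (ext x T a).
Proof.
move=> Hx Ka t tT; rewrite /ext; case: eqP => [->//|/eqP tn].
by apply: Hx; move: tT; rewrite leq_eqVlt (negbTE tn).
Qed.

Lemma prefix_ext {R : realType} (x : nat -> R) T a t :
  (t <= T)%N -> Defs.prefix (ext x T a) t = Defs.prefix x t.
Proof.
move=> tT; apply/rowP => i; rewrite !mxE /ext.
have : (val i < T.+1)%N by apply: leq_trans (ltn_ord i) _.
by case: eqP => // ->; rewrite ltnn.
Qed.

Lemma Iint_ext {R : realType} Delta (x : nat -> R) T a :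
  Iint T Delta (ext x T a) = Iint T Delta x.
Proof.
apply: eq_bigr => i _.
have Hi := ltn_ord i.
rewrite prefix_ext; last exact: ltnW.
rewrite /ext; case: eqP => [e|_]; first by exfalso; move: Hi e; clear; lia.
by case: eqP => [e|_] //; exfalso; move: Hi e; clear; lia.
Qed.

Lemma Iint_S {R : realType} Delta (x : nat -> R) T :
  Iint T.+1 Delta x = Iint T Delta x + Delta T (Defs.prefix x T) * (x T.+1 - x T).
Proof. by rewrite /Iint big_ord_recr. Qed.

Lemma sum_ext {R : realType} (g : nat -> R -> R) (x : nat -> R) T a :
  \sum_(t < T.+1) g t (ext x T a t) = \sum_(t < T.+1) g t (x t).
Proof.
apply: eq_bigr => i _; rewrite /ext; case: eqP => // e.
by have := ltn_ord i; rewrite e ltnn.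
Qed.
Arguments ext_omega {R K T x a}.

Lemma all_subs {R : realType} (K : nat -> set R) T :
  (forall t, (t < T)%N -> subs (K t.+1) -> subs (K t)) ->
  subs (K T) -> forall t, (t <= T)%N -> subs (K t).
Proof.
move=> Hs HT.
have H : forall n t, (t + n)%N = T -> subs (K t).
  elim=> [|n IH] t e; first by move: e; rewrite addn0 => ->.
  apply: Hs; first by lia.
  by apply: IH; lia.
by move=> t tT; apply: (H (T - t)%N); lia.
Qed.

Arguments all_subs {R K T}.

Lemma core_ind (R : realType) (x0 : R) (K : nat -> set R)
  (Delta : forall t : nat, 'rV[R]_t.+1 -> R) (T : nat) :
  K 0%N = [set x0] ->
  (forall t, (t <= T)%N -> exists y, K t y) ->
  (forall t, (t < T)%N -> subs (K t.+1) -> subs (K t)) ->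
  forall g : nat -> R -> R,
  (forall x, inOmega T K x -> \sum_(t < T.+1) g t (x t) + Iint T Delta x = 0) ->
  (exists k h : nat -> R, fit K T g k h) /\
  ((forall t, (t <= T)%N -> subs (K t) -> K t x0) ->
    forall k h, fit K T g k h -> \sum_(t < T.+1) (k t * x0 + h t) = 0).
Proof.
move=> K0; elim: T => [|T IH] Hne Hs g Hid.
  have Hc : inOmega 0 K (fun _ => x0).
    by move=> t; rewrite leqn0 => /eqP ->; rewrite K0.
  have := Hid _ Hc; rewrite big_ord1 /Iint big_ord0 addr0 => g0.
  split.
    exists (fun _ => 0), (fun _ => g 0%N x0) => t; rewrite leqn0 => /eqP -> y.
    by rewrite K0 => ->; rewrite mul0r add0r.
  move=> _ k h Hf; rewrite big_ord1 /= -Hf //.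
  by rewrite K0.
pose e t := xget 0 (K t).
have He : forall t, (t <= T.+1)%N -> K t (e t).
  by move=> t tT; apply: xgetPex; apply: Hne.
have key : forall x a, inOmega T K x -> K T.+1 a ->
    (\sum_(t < T.+1) g t (x t) + Iint T Delta x) + g T.+1 a
      + Delta T (Defs.prefix x T) * (a - x T) = 0.
  move=> x a Hx Ka; have := Hid _ (ext_omega Hx Ka).
  rewrite big_ord_recr /= Iint_S sum_ext Iint_ext prefix_ext //.
  have -> : ext x T a T.+1 = a by rewrite /ext eqxx.
  have -> : ext x T a T = x T by rewrite /ext; case: eqP => //; lia.
  by move=> E; rewrite -[RHS]E; ring.
case: (pselect (subs (K T.+1))) => [HsT|HnsT].
  have Hall := all_subs Hs HsT.
  split.
    exists (fun _ => 0), (fun t => g t (e t)) => t tT y Ky.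
    by rewrite (Hall t tT y (e t) Ky (He t tT)) mul0r add0r.
  move=> Hx0 k h Hf.
  have Hc : inOmega T.+1 K (fun _ => x0).
    by move=> t tT; apply: Hx0 => //; apply: Hall.
  have := Hid _ Hc.
  have -> : Iint T.+1 Delta (fun _ => x0) = 0.
    by rewrite /Iint big1 // => i _; rewrite subrr mulr0.
  rewrite addr0 => E; rewrite -[RHS]E; apply: eq_bigr => i _.
  have iT : (i <= T.+1)%N := ltn_ord i.
  by rewrite (Hf i iT x0) //; apply: Hx0 => //; apply: Hall.
have [a [b [Ka Kb ab]]] : exists a b, [/\ K T.+1 a, K T.+1 b & a != b].
  apply: contrapT => H; apply: HnsT => a b Ka Kb.
  apply: contrapT => /eqP ab; apply: H; by exists a, b.
have ba0 : b - a != 0 by rewrite subr_eq0 eq_sym.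
pose kap := (g T.+1 b - g T.+1 a) / (b - a).
pose hh := g T.+1 a - kap * a.
have HxT : inOmega T K e by move=> t tT; apply: He; lia.
have HD : forall x, inOmega T K x -> Delta T (Defs.prefix x T) = - kap.
  move=> x Hx; have e1 := key _ _ Hx Ka; have e2 := key _ _ Hx Kb.
  set D := Delta T _ in e1 e2 *.
  have eD : D * (b - a) = - (g T.+1 b - g T.+1 a).
    set Q := (\sum_(t < T.+1) g t (x t) + Iint T Delta x) in e1 e2.
    have -> : D * (b - a) = (Q + g T.+1 b + D * (b - x T))
       - (Q + g T.+1 a + D * (a - x T)) - (g T.+1 b - g T.+1 a) by ring.
    by rewrite e1 e2; ring.
  by rewrite /kap -mulNr -eD mulfK.
have HgT : forall y, K T.+1 y -> g T.+1 y = kap * y + hh.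
  move=> y Ky; have e1 := key _ _ HxT Ka; have e2 := key _ _ HxT Ky.
  rewrite HD // in e1 e2.
  set Q := (\sum_(t < T.+1) g t (e t) + Iint T Delta e) in e1 e2.
  rewrite /hh.
  have -> : g T.+1 y = (Q + g T.+1 y + - kap * (y - e T)) - (Q + g T.+1 a + - kap * (a - e T))
     + g T.+1 a - kap * a + kap * y by ring.
  by rewrite e1 e2; ring.
pose g' := fun t => if t == T then (fun y => g T y + kap * y + hh) else g t.
have Hid' : forall x, inOmega T K x -> \sum_(t < T.+1) g' t (x t) + Iint T Delta x = 0.
  move=> x Hx; have := key _ _ Hx Ka; rewrite HD //.
  rewrite !big_ord_recr /= /g' eqxx.
  have -> : \sum_(i < T) (if (widen_ord (leqnSn T) i : nat) == T
         then fun y : R => g T y + kap * y + hh else g i) (x i)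
         = \sum_(i < T) g i (x i).
    apply: eq_bigr => i _ /=; case: eqP => // ei.
    by have := ltn_ord i; rewrite ei ltnn.
  rewrite /hh => E0; rewrite -[RHS]E0; ring.
have [[k' [h' Hf']] IHB] := IH (fun t tT => Hne t (leqW tT))
   (fun t tT => Hs t (ltnW tT)) g' Hid'.
split.
  exists (fun t => if t == T.+1 then kap else if t == T then k' T - kap else k' t).
  exists (fun t => if t == T.+1 then hh else if t == T then h' T - hh else h' t).
  move=> t tT y Ky.
  case: eqP => [et|nt]; first by move: Ky; rewrite et => /HgT.
  have tT' : (t <= T)%N by lia.
  case: eqP => [et|nt'].
    have := Hf' t tT' y Ky; rewrite /g' et eqxx => E.
    have -> : g T y = (g T y + kap * y + hh) - kap * y - hh by ring.
    rewrite E; ring.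
  have := Hf' t tT' y Ky; rewrite /g'; case: eqP => // _ ->; ring.
move=> Hx0 k h Hf.
have fa := Hf _ (leqnn _) _ Ka; have fb := Hf _ (leqnn _) _ Kb.
have kk : k T.+1 = kap.
  rewrite /kap fa fb.
  have -> : k T.+1 * b + h T.+1 - (k T.+1 * a + h T.+1) = k T.+1 * (b - a) by ring.
  by rewrite mulfK.
have hk : h T.+1 = hh by rewrite /hh fa kk; ring.
have Hf2 : fit K T g' (fun t => if t == T then k T + kap else k t)
                      (fun t => if t == T then h T + hh else h t).
  move=> t tT y Ky; rewrite /g'; case: ifP => [/eqP et|_].
    have KT : K T y by rewrite -et.
    by rewrite /= Hf //; ring.
  exact: Hf _ (leqW tT) _ Ky.
have := IHB (fun t tT => Hx0 t (leqW tT)) _ _ Hf2.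
rewrite !big_ord_recr /= !eqxx kk hk => E0.
have ES : \sum_(i < T) ((if (i : nat) == T then k T + kap else k i) * x0 +
      (if (i : nat) == T then h T + hh else h i)) = \sum_(i < T) (k i * x0 + h i).
  apply: eq_bigr => i _; case: eqP => // ei.
  by have := ltn_ord i; rewrite ei ltnn.
rewrite ES in E0; rewrite -[RHS]E0; ring.
Qed.

Lemma card_inj {R : realType} {A B : set R} :
  (A #<= B)%card -> exists2 f : R -> R, set_fun A B f & set_inj A f.
Proof. by move/pcard_leP => /injfunPex. Qed.

Lemma core (R : realType) (T : nat) (x0 : R) (K : nat -> set R)
    (E : nat -> set (R -> R))
    (phi psi : nat -> R -> R) (Delta : forall t : nat, 'rV[R]_t.+1 -> R) :
  K 0%N = [set x0] ->
  (forall t, (t < T)%N -> (K t #<= K t.+1)%card) ->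
  (forall t, (t <= T)%N -> good_space (K t) (E t)) ->
  (forall t, (t <= T)%N -> E t (phi t)) ->
  (forall t, (t <= T)%N -> E t (psi t)) ->
  (forall x, inOmega T K x ->
     \sum_(t < T.+1) phi t (x t)
     = \sum_(t < T.+1) psi t (x t) + Iint T Delta x) ->
  (exists k h : nat -> R, forall t, (t <= T)%N ->
     forall y, K t y -> psi t y = phi t y + k t * y + h t)
  /\
  (forall S : nat -> (R -> R) -> R,
     (forall t, (t <= T)%N -> stock_additive x0 (K t) (E t) (S t)) ->
     \sum_(t < T.+1) S t (phi t) = \sum_(t < T.+1) S t (psi t)).
Proof.
move=> K0 Hcard Hgood Ephi Epsi Hid.
have Hne : forall t, (t <= T)%N -> exists y, K t y.
  elim=> [|t IH] tT; first by exists x0; rewrite K0.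
  have [y Ky] := IH (ltnW tT).
  have [f fS _] := card_inj (Hcard t tT).
  by exists (f y); apply: fS.
have Hs : forall t, (t < T)%N -> subs (K t.+1) -> subs (K t).
  move=> t tT HS a b Ka Kb.
  have [f fS fI] := card_inj (Hcard t tT).
  apply: fI; rewrite ?inE //.
  by apply: HS; apply: fS.
pose g := fun t y => psi t y - phi t y.
have Hidg : forall x, inOmega T K x -> \sum_(t < T.+1) g t (x t) + Iint T Delta x = 0.
  move=> x Hx; rewrite /g sumrB (Hid x Hx); ring.
have [[k [h Hf]] HB] := @core_ind R x0 K Delta T K0 Hne Hs g Hidg.
split.
  exists k, h => t tT y Ky; have := Hf t tT y Ky; rewrite /g => e.
  by rewrite -addrA -e; ring.
move=> S HS.
have Hx0 : forall t, (t <= T)%N -> subs (K t) -> K t x0.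
  move=> t tT Hsub; have [c Kc] := Hne t tT.
  have [S0 Sadd] := HS t tT.
  have [_ [E0 _ _ _ _]] := Hgood t tT.
  have e1 := Sadd (fun _ => 0) 1 0 E0.
  have e2 := Sadd (fun _ => 0) 0 c E0.
  have ef : (fun x => 0 + 1 * Xfun (K t) x + cstK (K t) 0 x)
          = (fun x => 0 + 0 * Xfun (K t) x + cstK (K t) c x).
    apply: funext => x; rewrite /Xfun /cstK; case: ifP => [Kx0|_]; last by ring.
    have Kx := set_mem Kx0.
    by rewrite (Hsub x c Kx Kc); ring.
  rewrite ef e2 S0 in e1.
  have -> : x0 = c by move: e1; lra.
  exact: Kc.
have := HB Hx0 k h Hf => Hsum.
have -> : \sum_(t < T.+1) S t (psi t) = \sum_(t < T.+1) (S t (phi t) + (k t * x0 + h t)).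
  apply: eq_bigr => i _.
  have iT : (i <= T)%N := ltn_ord i.
  have [_ Sadd] := HS i iT.
  have [sub _] := Hgood i iT.
  have -> : psi i = (fun x => phi i x + k i * Xfun (K i) x + cstK (K i) (h i) x).
    apply: funext => x; rewrite /Xfun /cstK; case: ifP => [Kx0|/negP Kx]; first have Kx := set_mem Kx0.
      by have := Hf i iT x Kx; rewrite /g => e; rewrite -addrA -e; ring.
    have [_ [_ Z1]] := sub _ (Epsi i iT); have [_ [_ Z2]] := sub _ (Ephi i iT).
    rewrite Z1 ?Z2; first ring.
      by move=> Kx'; apply: Kx; rewrite inE.
    by move=> Kx'; apply: Kx; rewrite inE.
  by rewrite Sadd; [ring | exact: Ephi].
by rewrite big_split /= Hsum addr0.
Qed.

Definition Wrep {R : realType} (T : nat) (K : nat -> set R) (E : nat -> set (R -> R))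
    (phi : nat -> R -> R) (Delta : forall t : nat, 'rV[R]_t.+1 -> R)
    (v : (nat -> R) -> R) : Prop :=
  (forall t, (t <= T)%N -> E t (phi t)) /\
  forall x, inOmega T K x -> v x = \sum_(t < T.+1) phi t (x t) + Iint T Delta x.

Lemma IintB {R : realType} T (D1 D2 : forall t : nat, 'rV[R]_t.+1 -> R) x :
  Iint T (fun t y => D2 t y - D1 t y) x = Iint T D2 x - Iint T D1 x.
Proof. by rewrite /Iint -sumrB; apply: eq_bigr => i _ /=; ring. Qed.

Lemma IintD {R : realType} T (D1 D2 : forall t : nat, 'rV[R]_t.+1 -> R) x :
  Iint T (fun t y => D1 t y + D2 t y) x = Iint T D1 x + Iint T D2 x.
Proof. by rewrite /Iint -big_split; apply: eq_bigr => i _ /=; ring. Qed.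

Theorem lemmaA2 (R : realType) (T : nat) (x0 : R) (K : nat -> set R)
    (E : nat -> set (R -> R))
    (phi psi : nat -> R -> R) (Delta : forall t : nat, 'rV[R]_t.+1 -> R) :
  (1 <= T)%N ->
  K 0%N = [set x0] ->
  (forall t, (t <= T)%N -> closed (K t)) ->
  (forall t, (t < T)%N -> (K t #<= K t.+1)%card) ->
  (forall t, (t <= T)%N -> good_space (K t) (E t)) ->
  (forall t, (t <= T)%N -> E t (phi t)) ->
  (forall t, (t <= T)%N -> E t (psi t)) ->
  inH T K Delta ->
  (forall x, inOmega T K x ->
     \sum_(t < T.+1) phi t (x t)
     = \sum_(t < T.+1) psi t (x t) + Iint T Delta x) ->
  (exists k h : nat -> R, forall t, (t <= T)%N ->
     forall y, K t y -> psi t y = phi t y + k t * y + h t)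
  /\
  (forall S : nat -> (R -> R) -> R,
     (forall t, (t <= T)%N -> stock_additive x0 (K t) (E t) (S t)) ->
     \sum_(t < T.+1) S t (phi t) = \sum_(t < T.+1) S t (psi t)
     /\
     exists SV : ((nat -> R) -> R) -> R,
       [/\ (* well defined: independent of the representation *)
           (forall v phi' Delta', represents T K E phi' Delta' v ->
              SV v = \sum_(t < T.+1) S t (phi' t)),
           (* cash additive *)
           (forall v (k : R), inV T K E v ->
              SV (fun x => v x + k) = SV v + k) &
           (* integral additive *)
           (forall v Delta', inV T K E v -> inH T K Delta' ->
              SV (fun x => v x + Iint T Delta' x) = SV v)]).
Proof.
move=> _ K0 _ Hcard Hgood Ephi Epsi _ Hid.
have [CA CB] := @core R T x0 K E phi psi Delta K0 Hcard Hgood Ephi Epsi Hid.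
split=> // S HS; split; first exact: CB.
have uniq : forall p1 D1 p2 D2 v, Wrep T K E p1 D1 v -> Wrep T K E p2 D2 v ->
    \sum_(t < T.+1) S t (p1 t) = \sum_(t < T.+1) S t (p2 t).
  move=> p1 D1 p2 D2 v [E1 W1] [E2 W2].
  have Hid' : forall x, inOmega T K x -> \sum_(t < T.+1) p1 t (x t)
     = \sum_(t < T.+1) p2 t (x t) + Iint T (fun t y => D2 t y - D1 t y) x.
    move=> x Hx; rewrite IintB; have := W1 x Hx; have := W2 x Hx; lra.
  exact: (@core R T x0 K E p1 p2 _ K0 Hcard Hgood E1 E2 Hid').2.
pose SV := fun v => xget 0 [set s | exists p D, Wrep T K E p D v /\ s = \sum_(t < T.+1) S t (p t)].
have SVE : forall p D v, Wrep T K E p D v -> SV v = \sum_(t < T.+1) S t (p t).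
  move=> p D v W.
  have : [set s | exists p D, Wrep T K E p D v /\ s = \sum_(t < T.+1) S t (p t)] (SV v).
    by apply: xgetPex; exists (\sum_(t < T.+1) S t (p t)), p, D.
  by move=> [p2 [D2 [W2 ->]]]; apply: uniq W2 W.
exists SV; split.
- by move=> v p D [Ep [_ Ev]]; exact: (SVE p D v (conj Ep Ev)).
- move=> v k [p [D [Ep [_ Ev]]]].
  pose p' := fun t => if t == 0%N then (fun y => p 0%N y + 0 * Xfun (K 0%N) y + cstK (K 0%N) k y) else p t.
  have W' : Wrep T K E p' D (fun x => v x + k).
    split.
      move=> t tT; rewrite /p'; case: eqP => [->|_]; last exact: Ep.
      have [_ [_ _ _ _ Hc]] := Hgood 0%N (leq0n _).
      have -> : (fun y => p 0%N y + 0 * Xfun (K 0%N) y + cstK (K 0%N) k y) = p 0%N \+ cstK (K 0%N) k.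
        by apply: funext => y /=; rewrite mul0r addr0.
      by apply: Hc; apply: Ep.
    move=> x Hx; rewrite Ev // !big_ord_recl /= /p' /=.
    have -> : cstK (K 0%N) k (x 0%N) = k.
      by rewrite /cstK; case: ifP => // /negP; rewrite inE; case; apply: Hx.
    ring.
  rewrite (SVE _ _ _ W') (SVE p D v) //.
  rewrite !big_ord_recl /p' /=.
  have [_ Sadd] := HS 0%N (leq0n _).
  by rewrite Sadd; [ring | exact: Ep].
- move=> v D' [p [D [Ep [_ Ev]]]] _.
  have W' : Wrep T K E p (fun t y => D t y + D' t y) (fun x => v x + Iint T D' x).
    by split=> // x Hx; rewrite IintD Ev //; ring.
  by rewrite (SVE _ _ _ W') (SVE p D v).
Qed.
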